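(* Let $X$ be a strongly $0$-dimensional, $\sigma$-compact, locally compact Hausdorff space. Then there exists $d\in\mathrm{Met}(X)$ such that for every $\xi\in X$ the map $F_\xi\colon X\to[0,\infty)$, $F_\xi(x)=d(x,\xi)$, is a topological embedding.
   Context: $\mathrm{Met}(X)$ denotes the set of all metrics on $X$ generating the topology of $X$. A topological space is strongly $0$-dimensional if for every pair $A,B$ of disjoint closed subsets there is a clopen set $V$ with $A\subseteq V$, $V\cap B=\emptyset$. *)

(* Defs.v *)
From HB Require Import structures.
From mathcomp Require Import all_boot all_order all_algebra.
From mathcomp Require Import all_classical all_reals all_analysis.
Set Implicit Arguments. Unset Strict Implicit. Unset Printing Implicit Defensive.
Import Order.TTheory GRing.Theory Num.Theory.
Local Open Scope classical_set_scope.
Local Open Scope ring_scope.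

Definition is_metric (R : realType) (T : Type) (d : T -> T -> R) : Prop :=
  (forall x y, 0 <= d x y) /\
  (forall x y, d x y = 0 <-> x = y) /\
  (forall x y, d x y = d y x) /\
  (forall x y z, d x z <= d x y + d y z).

Definition generates_topology (R : realType) (X : topologicalType)
  (d : X -> X -> R) : Prop :=
  forall A : set X,
    open A <-> (forall x, A x -> exists2 e : R, 0 < e & [set y | d x y < e] `<=` A).

Definition in_Met (R : realType) (X : topologicalType) (d : X -> X -> R) : Prop :=
  is_metric d /\ generates_topology d.

Definition metrizable (R : realType) (X : topologicalType) : Prop :=
  exists d : X -> X -> R, in_Met d.

Definition strongly_zero_dimensional (X : topologicalType) : Prop :=
  forall A B : set X, closed A -> closed B -> A `&` B = set0 ->
    exists V : set X, [/\ open V, closed V, A `<=` V & V `&` B = set0].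

Definition sigma_compact_space (X : topologicalType) : Prop :=
  exists K : nat -> set X, (forall n, compact (K n)) /\ \bigcup_n K n = setT.

Definition locally_compact_space (X : topologicalType) : Prop :=
  forall x : X, exists K : set X, compact K /\ nbhs x K.

Definition embedding (X Y : topologicalType) (f : X -> Y) : Prop :=
  [/\ injective f, continuous f &
      forall U : set X, open U ->
        exists2 V : set Y, open V & f @` U = f @` setT `&` V].

(* Main.v *)
Require Import Defs.
From HB Require Import structures.
From mathcomp Require Import all_boot all_order all_algebra.
From mathcomp Require Import all_classical all_reals all_analysis.
Import Order.TTheory GRing.Theory Num.Theory.
Local Open Scope classical_set_scope.
Local Open Scope ring_scope.
From mathcomp Require Import lra.
Definition w (R : realType) (n : nat) : R := (3^-1) ^+ n.
Definition P (R : realType) (a : nat -> bool) (n : nat) : R :=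
  \sum_(j < n) (a j)%:R * w R j.
Definition S (R : realType) (a : nat -> bool) : R := sup (range (P R a)).

Lemma w_gt0 (R : realType) n : 0 < w R n.
Proof. by rewrite /w exprn_gt0 // invr_gt0. Qed.

Lemma wS (R : realType) n : w R n.+1 = w R n / 3.
Proof. by rewrite /w exprS mulrC. Qed.

Lemma w_anti (R : realType) m n : (m <= n)%N -> w R n <= w R m.
Proof.
move=> mn; apply: ler_wiXn2l => //; rewrite ?invr_ge0 ?invf_le1 ?ler1n //.
Qed.

Lemma w0 (R : realType) : w R 0 = 1.
Proof. by rewrite /w expr0. Qed.

Lemma P_S (R : realType) a n : P R a n.+1 = P R a n + (a n)%:R * w R n.
Proof. by rewrite /P big_ord_recr. Qed.

Lemma term_ge0 (R : realType) (a : nat -> bool) n : 0 <= (a n)%:R * w R n.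
Proof. by rewrite mulr_ge0 // ltW // w_gt0. Qed.

Lemma term_le (R : realType) (a : nat -> bool) n : (a n)%:R * w R n <= w R n.
Proof. case: (a n); rewrite ?mul1r ?mul0r //; exact: ltW (w_gt0 _ _). Qed.

Lemma P_tail (R : realType) a N k :
  P R a (N + k) <= P R a N + 3/2 * (w R N - w R (N + k)).
Proof.
elim: k => [|k IH]; first by rewrite addn0 subrr mulr0 addr0.
rewrite addnS P_S wS.
have := term_le R a (N + k); have := w_gt0 R (N+k).
move: IH; set t := ((a (N+k))%:R * _); set u := w R (N + k); set q := P R a (N+k).
set q0 := P R a N; set wN := w R N; lra.
Qed.

Lemma P_mono (R : realType) a m n : (m <= n)%N -> P R a m <= P R a n.
Proof.
move/subnK => <-; elim: (n - m)%N => [|k IH] //.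
rewrite addSn P_S; apply: le_trans IH _; rewrite lerDl; exact: term_ge0.
Qed.

Lemma P_ge0 (R : realType) a n : 0 <= P R a n.
Proof. by have := @P_mono R a 0 n (leq0n n); rewrite /P big_ord0. Qed.

Lemma P_le (R : realType) a N n : P R a n <= P R a N + 3/2 * w R N.
Proof.
case: (leqP n N) => [nN|Nn].
  apply: le_trans (P_mono R a _ _ nN) _; rewrite lerDl mulr_ge0 //; exact: ltW (w_gt0 _ _).
rewrite -(subnK (ltnW Nn)) addnC; apply: le_trans (P_tail _ _ _ _) _.
rewrite lerD2l ler_wpM2l // lerBlDr lerDl; exact: ltW (w_gt0 _ _).
Qed.

Lemma has_sup_P (R : realType) a : has_sup (range (P R a)).
Proof.
split; first by exists (P R a 0); exists 0%N.
exists (P R a 0 + 3/2 * w R 0) => _ [n _ <-]; exact: P_le.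
Qed.

Lemma S_ge (R : realType) a n : P R a n <= S R a.
Proof. by apply: (sup_upper_bound (has_sup_P R a)); exists n. Qed.

Lemma S_le (R : realType) a M : (forall n, P R a n <= M) -> S R a <= M.
Proof.
move=> H; apply: ge_sup; first by exists (P R a 0); exists 0%N.
by move=> _ [n _ <-].
Qed.

Lemma S_ge0 (R : realType) a : 0 <= S R a.
Proof. exact: le_trans (P_ge0 R a 0) (S_ge R a 0). Qed.

Lemma S_upper (R : realType) a N : S R a <= P R a N + 3/2 * w R N.
Proof. by apply: S_le => n; exact: P_le. Qed.

Lemma S_digit_ge (R : realType) a N : P R a N + (a N)%:R * w R N <= S R a.
Proof. by rewrite -P_S; exact: S_ge. Qed.

Lemma S_digit_le (R : realType) a N :
  S R a <= P R a N + (a N)%:R * w R N + w R N / 2.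
Proof.
apply: le_trans (S_upper R a N.+1) _; rewrite P_S wS.
have := w_gt0 R N; set u := w R N; lra.
Qed.

Lemma S_sub (R : realType) (a b c : nat -> bool) :
  (forall n, (a n <= b n + c n)%N) -> S R a <= S R b + S R c.
Proof.
move=> H; apply: S_le => n; apply: le_trans (lerD (S_ge R b n) (S_ge R c n)).
rewrite /P -big_split /=; apply: ler_sum => i _.
rewrite -mulrDl; apply: ler_wpM2r; first exact: ltW (w_gt0 _ _).
rewrite -natrD ler_nat; exact: H.
Qed.

Lemma S_eq0 (R : realType) (a : nat -> bool) : (forall n, a n = false) -> S R a = 0.
Proof.
move=> H; apply/eqP; rewrite eq_le S_ge0 andbT; apply: S_le => n.
by rewrite /P big1 // => i _; rewrite H mul0r.
Qed.

Lemma S_pos (R : realType) (a : nat -> bool) k : a k -> w R k <= S R a.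
Proof.
move=> ak; apply: le_trans (S_digit_ge R a k); rewrite ak mul1r lerDr; exact: P_ge0.
Qed.

Lemma digit_lemma (R : realType) (a b : nat -> bool) k :
  `|S R a - S R b| < w R k / 2 -> forall i, (i <= k)%N -> a i = b i.
Proof.
move=> H i ik; apply/eqP/negPn/negP => abi.
have ex : exists n, (n <= k)%N && (a n != b n) by exists i; rewrite ik.
case: (ex_minnP ex) => j /andP[jk abj] jmin.
have Pj : P R a j = P R b j.
  rewrite /P; apply: eq_bigr => l _; congr (_ * _); congr (_%:R); congr nat_of_bool.
  apply/eqP/negPn/negP => abl.
  have /jmin : (l <= k)%N && (a l != b l).
    have lj : (l < j)%N := ltn_ord l.
    apply/andP; split; last exact: abl.
    exact: leq_trans (ltnW lj) jk.
  by rewrite leqNgt ltn_ord.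
have wjk := w_anti R _ _ jk.
have wpos := w_gt0 R j.
move: abj H; case Ha: (a _); case Hb: (b _) => // _.
  have h1 := S_digit_ge R a j; have h2 := S_digit_le R b j.
  rewrite Ha Hb Pj mul1r mul0r addr0 in h1 h2.
  move=> H; have := ler_norm (S R a - S R b).
  set sa := S R a in h1 H *; set sb := S R b in h2 H *.
  set p := P R b j in h1 h2; set u := w R j in h1 h2 wjk wpos.
  set v := w R k in H wjk; set nn := `|_| in H *; lra.
have h1 := S_digit_ge R b j; have h2 := S_digit_le R a j.
rewrite Ha Hb Pj mul1r mul0r addr0 in h1 h2.
move=> H; rewrite distrC in H; have := ler_norm (S R b - S R a).
set sa := S R a in h2 H *; set sb := S R b in h1 H *.
set p := P R b j in h1 h2; set u := w R j in h1 h2 wjk wpos.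
set v := w R k in H wjk; set nn := `|_| in H *; lra.
Qed.
Definition sep (X : topologicalType) (C : nat -> set X) (x y : X) : nat -> bool :=
  fun k => `[< C k x >] != `[< C k y >].
Arguments sep {X}.
Definition dist (R : realType) (X : topologicalType) (C : nat -> set X) (x y : X) : R :=
  S R (sep C x y).
Arguments dist R {X}.

Lemma sep_false_iff (X : topologicalType) (C : nat -> set X) x y k :
  sep C x y k = false -> (C k x <-> C k y).
Proof.
rewrite /sep => /negbFE/eqP H; split => h.
  by have := H; rewrite (asboolT h) => /esym/asboolP.
by have := H; rewrite (asboolT h) => /asboolP.
Qed.

Arguments sep_false_iff {X}.
Lemma sep_true (X : topologicalType) (C : nat -> set X) x y k :
  C k x -> ~ C k y -> sep C x y k.
Proof. by move=> h1 h2; rewrite /sep (asboolT h1) (asboolF h2). Qed.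
Arguments sep_true {X C x y k}.

Lemma dist_metric (R : realType) (X : topologicalType) (C : nat -> set X) :
  (forall x y : X, x <> y -> exists k, C k x /\ ~ C k y) ->
  is_metric (dist R C).
Proof.
move=> Hsep; split; first by move=> x y; exact: S_ge0.
split.
  move=> x y; split; last first.
    by move=> ->; apply: S_eq0 => n; rewrite /sep eqxx.
  move=> H; apply: contrapT => /Hsep [k [h1 h2]].
  have := S_pos R _ _ (sep_true h1 h2); rewrite -/(dist R C x y) H.
  by rewrite leNgt w_gt0.
split.
  by move=> x y; rewrite /dist; congr S; apply: funext => k; rewrite /sep eq_sym.
move=> x y z; apply: S_sub => n; rewrite /sep.
by case: `[< C n x >]; case: `[< C n y >]; case: `[< C n z >].
Qed.

Lemma exists_small_w (R : realType) (e : R) : 0 < e -> exists N, 3/2 * w R N < e.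
Proof.
move=> e0; have := @archi_boundP R (3/2/e) (ltW (divr_gt0 _ e0)).
have h32 : (0:R) < 3/2 by rewrite divr_gt0.
move=> /(_ h32); set N := Num.Def.archi_bound _ => HN; exists N.
have wN : w R N * (N.+1)%:R <= 1.
  rewrite /w exprVn -natrX mulrC ler_pdivrMr ?ltr0n ?expn_gt0 // mul1r ler_nat.
  exact: ltn_expl.
rewrite ltr_pdivrMr // in HN.
have wpos := w_gt0 R N; move: wN HN wpos; rewrite -addn1 natrD.
set W := w R N; set n := N%:R; have : 0 <= n by rewrite ler0n.
move=> n0 h1 h2 h3; nra.
Qed.

Lemma open_agree (X : topologicalType) (C : nat -> set X) (x : X) N :
  (forall k, open (C k) /\ closed (C k)) ->
  open [set y | forall k, (k < N)%N -> (C k y <-> C k x)].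
Proof.
move=> Hclo; elim: N => [|N IH].
  have -> : [set y | forall k, (k < 0)%N -> (C k y <-> C k x)] = setT.
    by rewrite predeqE => y; split => // _ k.
  exact: openT.
have -> : [set y | forall k, (k < N.+1)%N -> (C k y <-> C k x)] =
  [set y | forall k, (k < N)%N -> (C k y <-> C k x)] `&` [set y | C N y <-> C N x].
  rewrite predeqE => y; split.
    by move=> H; split => [k kN|]; apply: H => //; exact: ltnW.
  move=> [H1 H2] k; rewrite ltnS leq_eqVlt => /orP[/eqP -> //|]; exact: H1.
apply: openI => //; case: (pselect (C N x)) => cx.
  have -> : [set y | C N y <-> C N x] = C N by rewrite predeqE => y /=; tauto.
  exact: (Hclo N).1.
have -> : [set y | C N y <-> C N x] = ~` C N by rewrite predeqE => y /=; tauto.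
exact: closed_openC (Hclo N).2.
Qed.

Lemma dist_nbhd (R : realType) (X : topologicalType) (C : nat -> set X) (x : X) (e : R) :
  (forall k, open (C k) /\ closed (C k)) -> 0 < e ->
  exists U, [/\ open U, U x & forall y, U y -> dist R C x y < e].
Proof.
move=> Hclo e0; have [N HN] := exists_small_w R e e0.
exists [set y | forall k, (k < N)%N -> (C k y <-> C k x)]; split.
- exact: open_agree.
- by [].
move=> y Hy; apply: le_lt_trans (S_upper R _ N) _.
have -> : P R (sep C x y) N = 0.
  rewrite /P big1 // => i _.
  have [h1 h2] := Hy i (ltn_ord i).
  suff -> : sep C x y i = false by rewrite mul0r.
  rewrite /sep; case: (pselect (C i x)) => cx.
    by rewrite (asboolT cx) (asboolT (h2 cx)).
  by rewrite (asboolF cx) (asboolF (fun cy => cx (h1 cy))).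
by rewrite add0r.
Qed.

Lemma dist_generates (R : realType) (X : topologicalType) (C : nat -> set X) :
  (forall k, open (C k) /\ closed (C k)) ->
  (forall x U, open U -> U x -> exists k, C k x /\ C k `<=` U) ->
  generates_topology (dist R C).
Proof.
move=> Hclo Hbase A; split.
  move=> oA x Ax; have [k [ck sub]] := Hbase x A oA Ax.
  exists (w R k); first exact: w_gt0.
  move=> y /= dxy; apply: sub; case E: (sep C x y k).
    have := S_pos R _ _ E; rewrite -/(dist R C x y) => h.
    by move: dxy; rewrite ltNge h.
  exact/(sep_false_iff C x y k E).
move=> H; rewrite openE => x Ax; have [e e0 sub] := H x Ax.
have [U [oU Ux HU]] := dist_nbhd R X C x e Hclo e0.
rewrite /interior /= nbhsE /=; exists U => //.
by move=> y Uy; apply: sub; exact: HU.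
Qed.

Lemma sep_eq_iff (X : topologicalType) (C : nat -> set X) x y z k :
  sep C x z k = sep C y z k -> (C k x <-> C k y).
Proof.
rewrite /sep.
case: (asboolP (C k x)) => a1; case: (asboolP (C k y)) => a2;
  case: (asboolP (C k z)) => a3 //= _; tauto.
Qed.

Section Emb.
Import numFieldNormedType.Exports.
Lemma dist_embedding (R : realType) (X : topologicalType) (C : nat -> set X) (xi : X) :
  (forall k, open (C k) /\ closed (C k)) ->
  (forall x U, open U -> U x -> exists k, C k x /\ C k `<=` U) ->
  (forall x y : X, x <> y -> exists k, C k x /\ ~ C k y) ->
  embedding (fun x : X => dist R C x xi : subspace `[0, +oo[%classic).
Proof.
move=> Hclo Hbase Hsep; split.
- move=> x y /= H; apply: contrapT => /Hsep [k [h1 h2]].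
  have : `|S R (sep C x xi) - S R (sep C y xi)| < w R k / 2.
    by rewrite -/(dist R C x xi) H subrr normr0 divr_gt0 // w_gt0.
  move/digit_lemma => /(_ k (leqnn k)) E.
  exact: h2 ((@sep_eq_iff _ _ _ _ _ _ E).1 h1).
- move=> x W HW.
  have [Hpos [Hzero [Hsym Htri]]] := dist_metric R X C Hsep.
  have Ax : forall z, `[0, +oo[%classic (dist R C z xi).
    move=> z; rewrite /= in_itv /= andbT; exact: S_ge0.
  have [V nV WV] := (@nbhs_subspace_ex _ (`[0, +oo[%classic : set R) W _ (Ax x)).1 HW.
  move/nbhs_ballP: nV => [e e0 ballV].
  have [U [oU Ux HU]] := dist_nbhd R X C x e Hclo e0.
  suff : nbhs x [set y | W (dist R C y xi)] by [].
  rewrite nbhsE /=; exists U; first by split.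
  move=> y Uy /=.
  suff : (V `&` `[0, +oo[%classic) (dist R C y xi) by rewrite -WV => -[].
  split; last exact: Ax.
  apply: ballV; rewrite -ball_normE /ball_ /=.
  have h1 := HU y Uy; have h2 := Htri x y xi; have h3 := Htri y x xi.
  rewrite (Hsym y x) in h3.
  rewrite ltr_norml; apply/andP; split; lra.
- move=> U oU.
  pose Vr : set R := \bigcup_(p in [set p : X * nat | U p.1 /\ C p.2 p.1 /\ C p.2 `<=` U])
    ball (dist R C p.1 xi) (w R p.2 / 2).
  exists (Vr : set (subspace `[0, +oo[%classic)).
    by apply: open_subspaceW; apply: bigcup_open => p _; exact: ball_open.
  rewrite predeqE => r; split.
    case=> y Uy <-; split; first by exists y.
    have [k [cky sub]] := Hbase y U oU Uy.
    exists (y, k) => //=; apply: ballxx; by rewrite divr_gt0 ?w_gt0.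
  case=> -[y _ <-] [[x k] [Ux [ckx sub]] hb] /=.
  exists y => //; apply: sub.
  move: hb; rewrite -ball_normE /ball_ /= => hb.
  have E := digit_lemma R _ _ k hb k (leqnn k).
  exact: ((@sep_eq_iff _ _ _ _ _ _ E).1 ckx).
Qed.
End Emb.

Lemma finite_cover (X : topologicalType) (K : set X) (Q : X -> set X) :
  compact K -> (forall x, K x -> nbhs x (Q x)) ->
  exists s : seq X, K `<=` [set y | exists2 q, q \in s & Q q y].
Proof.
move/compact_near_coveringP => cK HQ.
pose F := filter_from [set: seq X] (fun s0 => [set s : seq X | {subset s0 <= s}]).
have FF : Filter F.
  apply: filter_from_filter; first by exists [::].
  move=> i j _ _; exists (i ++ j) => // s /= H; split => z zi; apply: H;
    by rewrite mem_cat zi ?orbT.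
have := cK (seq X) F (fun s y => exists2 q, q \in s & Q q y) FF.
case.
- move=> x Kx; exists (Q x, [set s | {subset [:: x] <= s}]).
    split; first exact: HQ.
    by exists [:: x].
  case=> y s /= [Qy sub]; exists x => //; apply: sub; exact: mem_head.
- by move=> s0 _ H; exists s0; apply: H => //.
Qed.

Lemma base_exists (R : realType) (X : topologicalType) :
  metrizable R X -> strongly_zero_dimensional X -> sigma_compact_space X ->
  exists C : nat -> set X, [/\ (forall k, open (C k) /\ closed (C k)),
   (forall x U, open U -> U x -> exists k, C k x /\ C k `<=` U) &
   (forall x y, x <> y -> exists k, C k x /\ ~ C k y)].
Proof.
move=> [d0 [[d0pos [d0zero [d0sym d0tri]]] d0gen]] Hszd [K [Kc KT]].
have ball_open0 : forall q (r : R), open [set y | d0 q y < r].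
  move=> q r; apply/d0gen => y /= hy; exists (r - d0 q y); first by rewrite subr_gt0.
  move=> z /= hz; have := d0tri q y z; lra.
have cball_closed : forall q (r : R), closed [set y | d0 q y <= r].
  move=> q r; rewrite -openC; apply/d0gen => y /= /negP; rewrite -ltNge => hy.
  exists (d0 q y - r); first by rewrite subr_gt0.
  move=> z /= hz; apply/negP; rewrite -ltNge; have := d0tri q z y.
  rewrite (d0sym z y); lra.
pose r (m : nat) : R := (m.+1%:R)^-1.
have r_gt0 : forall m, 0 < r m by move=> m; rewrite invr_gt0 ltr0n.
have HV : forall qm : X * nat, exists V : set X,
    [/\ open V, closed V, [set y | d0 qm.1 y <= r qm.2] `<=` V &
        V `<=` [set y | d0 qm.1 y < 2 * r qm.2]].
  case=> q m /=.
  have [|||V [oV cV AV VB]] := Hszd [set y | d0 q y <= r m] (~` [set y | d0 q y < 2 * r m]).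
  - exact: cball_closed.
  - exact: open_closedC.
  - rewrite -subset0 => y /= [h1 h2]; apply: h2; have := r_gt0 m; lra.
  exists V; split => // y Vy; apply: contrapT => nB.
  by have : (V `&` ~` [set y | d0 q y < 2 * r m]) y by []; rewrite VB.
have [Vf HVf] := choice HV.
have HFc : forall nm : nat * nat, exists s : seq X,
    K nm.1 `<=` [set y | exists2 q, q \in s & d0 q y < r nm.2].
  case=> n m /=; apply: (@finite_cover X (K n) (fun q => [set y | d0 q y < r m])) => //.
  move=> x _; apply: open_nbhs_nbhs; split; first exact: ball_open0.
  by rewrite /= (proj2 (d0zero x x) erefl).
have [Fs HFs] := choice HFc.
pose C (k : nat) : set X :=
  match unpickle k with
  | Some (n, m, i) =>
      match nth None (map Some (Fs (n, m))) i with
      | Some q => Vf (q, m)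
      | None => set0
      end
  | None => set0
  end.
have Hclo : forall k, open (C k) /\ closed (C k).
  move=> k; rewrite /C; case: (unpickle k) => [[[n m] i]|]; last by split; [exact: open0|exact: closed0].
  case: (nth _ _ _) => [q|]; last by split; [exact: open0|exact: closed0].
  by have [] := HVf (q, m).
have Hbase : forall x U, open U -> U x -> exists k, C k x /\ C k `<=` U.
  move=> x U oU Ux; have [e e0 sub] := (d0gen U).1 oU x Ux.
  have h3 : (0:R) <= 3 / e by rewrite divr_ge0 // ltW.
  have [m hm] : exists m : nat, 3 / e < m%:R.
    by exists (Num.Def.archi_bound (3/e)); exact: archi_boundP.
  have rm : 3 * r m < e.
    rewrite ltr_pdivrMr // in hm.
    rewrite /r ltr_pdivrMr ?ltr0n // -[m.+1]addn1 natrD; nra.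
  have : setT x by [].
  rewrite -KT => -[n _ Knx].
  have [q qs dqx] := HFs (n, m) x Knx.
  exists (pickle (n, m, index q (Fs (n, m)))).
  have -> : C (pickle (n, m, index q (Fs (n, m)))) = Vf (q, m).
    by rewrite /C pickleK (nth_map q) ?index_mem // nth_index.
  have [_ _ AV VB] := HVf (q, m); split.
    by apply: AV; rewrite /= ltW.
  move=> y /VB /= hy; apply: sub => /=.
  have := d0tri x q y; rewrite (d0sym x q); lra.
exists C; split => // x y xy.
have dxy : 0 < d0 x y.
  rewrite lt_neqAle d0pos andbT; apply/eqP => /esym /d0zero; exact: xy.
have Ux : [set z | d0 x z < d0 x y] x by rewrite /= (proj2 (d0zero x x) erefl).
have [k [Ckx sub]] := Hbase x [set z | d0 x z < d0 x y] (ball_open0 _ _) Ux.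
exists k; split => // /sub /=; by rewrite ltxx.
Qed.

Theorem theorem1p4 (R : realType) (X : topologicalType) :
  metrizable R X ->
  strongly_zero_dimensional X ->
  sigma_compact_space X ->
  locally_compact_space X ->
  hausdorff_space X ->
  exists d : X -> X -> R, in_Met d /\
    (forall xi : X,
       embedding (fun x : X => d x xi : subspace `[0, +oo[%classic)).
Proof.
move=> Hm Hszd Hsc _ _.
have [C [Hclo Hbase Hsep]] := base_exists R X Hm Hszd Hsc.
exists (dist R C); split.
  split; [exact: (dist_metric R X C Hsep) | exact: (dist_generates R X C Hclo Hbase)].
move=> xi; exact: (dist_embedding R X C xi Hclo Hbase Hsep).
Qed.
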